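(* Let $d\ge1$ and let $\mathcal{G}=(G;T_1,\ldots,T_d)$ be a $d$-tree decomposition. Then there exists a sequence of $d$-tree decompositions $\mathcal{K}_1=\mathcal{G}^{(1)}\rightarrow\mathcal{G}^{(2)}\rightarrow\cdots\rightarrow\mathcal{G}^{(n)}=\mathcal{G}$ such that for all $2\le i\le n$, $\mathcal{G}^{(i)}$ is obtained from $\mathcal{G}^{(i-1)}$ by a $d$-tree $j$-extension for some $0\le j\le d-1$.
   Context: A multi-graph is finite and loop-free, possibly with parallel edges. A $d$-tree decomposition is a tuple $\mathcal{G}=(G;T_1,\ldots,T_d)$ where $G$ is a multi-graph and $T_1,\ldots,T_d$ are spanning trees of $G$ whose edge sets partition $E(G)$ (distinct parallel edges are distinct edges). By convention, $\mathcal{K}_1=(K_1;T_1,\ldots,T_d)$, where $K_1$ is the graph with one vertex and no edges and all $T_i$ are edgeless, is a $d$-tree decomposition. For a multi-graph $G$, a $d$-dimensional $j$-extension forms $G'$ by deleting a set $F$ of $j$ edges of $G$ and adding a new vertex $v$ together with $d+j$ new edges joining $v$ to vertices of $G$ (parallel new edges allowed), such that every endpoint of an edge of $F$ is a neighbour of $v$ in $G'$ (for $d=1$ any $j\ge0$ is allowed). A $d$-tree decomposition $\mathcal{G}'=(G';T_1',\ldots,T_d')$ is obtained from $\mathcal{G}=(G;T_1,\ldots,T_d)$ by a $d$-tree $j$-extension ($0\le j\le d-1$) if $G'$ is obtained from $G$ by a $d$-dimensional $j$-extension adding a new vertex $v$, and for each $i$, $T_i'$ is obtained from $T_i$ by a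 $1$-dimensional $k_i$-extension adding the same vertex $v$, for some $0\le k_i\le d-1$ (so $\sum_i k_i=j$). *)

(* Defs.v *)
From mathcomp Require Import all_boot.
Set Implicit Arguments. Unset Strict Implicit. Unset Printing Implicit Defensive.

(* A multigraph with a colouring of its edges (colour i = edges of T_(i+1)).
   Vertices are 0, ..., nv-1.  An edge is a triple ((u, v), c): endpoints u, v
   (unordered: ((u,v),c) and ((v,u),c) denote the same kind of edge) and
   colour c.  Parallel edges are repeated entries of the list; distinct
   positions are distinct edges. *)
Record tdec := TDec { nv : nat; edges : seq (nat * nat * nat) }.

Definition joins (e : nat * nat) (x y : nat) : bool :=
  ((e.1 == x) && (e.2 == y)) || ((e.1 == y) && (e.2 == x)).

Definition graph_adj (n : nat) (s : seq (nat * nat)) : rel 'I_n :=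
  fun x y => has (fun e => joins e x y) s.

Definition connected_on (n : nat) (s : seq (nat * nat)) : Prop :=
  forall x y : 'I_n, connect (graph_adj s) x y.

Definition has_cycle (s : seq (nat * nat)) : Prop :=
  exists (idx vs : seq nat),
    [/\ 2 <= size idx, size vs = size idx, uniq idx, uniq vs
      & all (fun k => k < size s) idx /\
        forall j, j < size idx ->
          joins (nth (0, 0) s (nth 0 idx j)) (nth 0 vs j)
                (nth 0 vs (j.+1 %% size idx))].

Definition is_spanning_tree (n : nat) (s : seq (nat * nat)) : Prop :=
  [/\ 0 < n,
      all (fun e => [&& e.1 < n, e.2 < n & e.1 != e.2]) s,
      connected_on n s
    & ~ has_cycle s].

Definition color_class (E : seq (nat * nat * nat)) (i : nat) : seq (nat * nat) :=
  [seq e.1 | e <- E & e.2 == i].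

Definition is_tdec (d : nat) (G : tdec) : Prop :=
  (forall e, e \in edges G -> e.1.1 != e.1.2 /\ e.2 < d) /\
  (forall i, i < d -> is_spanning_tree (nv G) (color_class (edges G) i)).

Definition K1 : tdec := TDec 1 [::].

(* G' is obtained from G by a d-tree j-extension.  The new vertex is
   v = nv G; m selects the kept edges, F = deleted edges, A = new edges. *)
Definition tree_ext (d : nat) (G G' : tdec) (j : nat) : Prop :=
  exists (m : bitseq) (A : seq (nat * nat * nat)),
    let v := nv G in
    let F := mask (map negb m) (edges G) in
    let R := mask m (edges G) in
    [/\ size m = size (edges G) /\ nv G' = v.+1,
        edges G' = R ++ A,
        size F = j /\ j <= d - 1,
        size A = d + j
      & [/\
            all (fun a => ((a.1.1 == v) && (a.1.2 < v)) ||
                          ((a.1.2 == v) && (a.1.1 < v))) A,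
            (* d-dimensional j-extension: endpoints of F are neighbours of v *)
            (forall f, f \in F -> forall x, x = f.1.1 \/ x = f.1.2 ->
               exists2 a, a \in A & joins a.1 v x),
            (* each T_i' is a 1-dimensional k_i-extension of T_i, k_i <= d-1 *)
            (forall i, i < d ->
               let k := count (fun f => f.2 == i) F in
               [/\ k <= d - 1,
                   count (fun a => a.2 == i) A = 1 + k
                 & forall f, f \in F -> f.2 = i ->
                     forall x, x = f.1.1 \/ x = f.1.2 ->
                       exists2 a, a \in A & (a.2 = i /\ joins a.1 v x)])
          & is_tdec d G']].

Definition tdec_iso (G H : tdec) : Prop :=
  nv G = nv H /\ size (edges G) = size (edges H) /\
  exists (sigma pi : nat -> nat),
    [/\ {in [pred x | x < nv G] &, injective sigma},
        (forall x, x < nv G -> sigma x < nv H),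
        {in [pred k | k < size (edges G)] &, injective pi},
        (forall k, k < size (edges G) -> pi k < size (edges H))
      & forall k, k < size (edges G) ->
          let e := nth (0, 0, 0) (edges G) k in
          let e' := nth (0, 0, 0) (edges H) (pi k) in
          e'.2 = e.2 /\ joins e'.1 (sigma e.1.1) (sigma e.1.2)].

(* Main.v *)
Require Import Defs.
From mathcomp Require Import all_boot zify.
Set Implicit Arguments. Unset Strict Implicit. Unset Printing Implicit Defensive.


Definition nadj (s : seq (nat * nat)) : rel nat := fun x y => has (fun e => joins e x y) s.
Definition nconn (s : seq (nat * nat)) (x y : nat) : Prop :=
  exists p, path (nadj s) x p /\ last x p = y.

Lemma joins_sym e x y : joins e x y = joins e y x.
Proof. by rewrite /joins orbC. Qed.

Lemma joinsE e x y : joins e x y -> (e.1 = x /\ e.2 = y) \/ (e.1 = y /\ e.2 = x).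
Proof. by rewrite /joins => /orP[/andP[/eqP-> /eqP->]|/andP[/eqP-> /eqP->]]; auto. Qed.

Lemma joins2 e x y x' y' : joins e x y -> joins e x' y' ->
  (x = x' /\ y = y') \/ (x = y' /\ y = x').
Proof. by move=> /joinsE[[<- <-]|[<- <-]] /joinsE[[<- <-]|[<- <-]]; auto. Qed.

Lemma nadj_sym s x y : nadj s x y = nadj s y x.
Proof. by apply: eq_has => e; rewrite joins_sym. Qed.

Lemma nconn_refl s x : nconn s x x.
Proof. by exists [::]. Qed.

Lemma nconn1 s x y : nadj s x y -> nconn s x y.
Proof. by move=> h; exists [:: y]; rewrite /= h. Qed.

Lemma nconn_trans s x y z : nconn s x y -> nconn s y z -> nconn s x z.
Proof.
move=> [p [hp <-]] [q [hq <-]]; exists (p ++ q).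
by rewrite cat_path hp hq last_cat.
Qed.

Lemma nconn_ind s (P : nat -> Prop) y :
  P y -> (forall x z, nadj s x z -> nconn s z y -> P z -> P x) ->
  forall x, nconn s x y -> P x.
Proof.
move=> Py step x [p [hp hl]]; elim: p x hp hl => [|z p IH] x /=.
  by move=> _ ->.
move=> /andP[hxz hp] hl; apply: (step x z hxz); first by exists p.
exact: IH.
Qed.

Lemma nconn_sym s x y : nconn s x y -> nconn s y x.
Proof.
move=> h; apply: (nconn_ind (P := fun x => nconn s y x)) h; first exact: nconn_refl.
move=> a b hab _ hyb; apply: nconn_trans hyb _; apply: nconn1; by rewrite nadj_sym.
Qed.

Lemma nadj_sub s t x y : {subset s <= t} -> nadj s x y -> nadj t x y.
Proof. move=> st /hasP[e he hj]; apply/hasP; exists e => //; exact: st. Qed.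

Lemma nconn_sub s t x y : {subset s <= t} -> nconn s x y -> nconn t x y.
Proof.
move=> st h; apply: (nconn_ind (P := fun x => nconn t x y)) h; first exact: nconn_refl.
move=> a b hab _ hb; apply: nconn_trans hb; apply: nconn1; exact: nadj_sub hab.
Qed.

Lemma nconn_perm s t x y : perm_eq s t -> nconn s x y -> nconn t x y.
Proof. move=> st; apply: nconn_sub => z; by rewrite (perm_mem st). Qed.

Lemma nconn_redundant e t x y :
  nconn (e :: t) x y -> nconn t e.1 e.2 -> nconn t x y.
Proof.
move=> h he; apply: (nconn_ind (P := fun x => nconn t x y)) h; first exact: nconn_refl.
move=> a b /= /orP[/joinsE[[<- <-]|[<- <-]]|hab] _ hb; apply: nconn_trans hb => //.
  exact: nconn_sym.
exact: nconn1.
Qed.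

Lemma nconn_cons e t x y :
  nconn (e :: t) x y ->
  nconn t x y \/ (nconn t x e.1 /\ nconn t e.2 y) \/ (nconn t x e.2 /\ nconn t e.1 y).
Proof.
move=> h; apply: (nconn_ind (P := fun x => nconn t x y \/ (nconn t x e.1 /\ nconn t e.2 y) \/ (nconn t x e.2 /\ nconn t e.1 y))) h.
  by left; exact: nconn_refl.
move=> a b /= /orP[/joinsE[[ha hb]|[ha hb]]|hab] _.
- subst a b => -[h|[[h1 h2]|[h1 h2]]].
  + by right; left; split => //; exact: nconn_refl.
  + by right; left; split => //; exact: nconn_refl.
  + by left.
- subst a b => -[h|[[h1 h2]|[h1 h2]]].
  + by right; right; split => //; exact: nconn_refl.
  + by left.
  + by right; right; split => //; exact: nconn_refl.
- have h1 := nconn1 hab.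
  move=> [h|[[h2 h3]|[h2 h3]]].
  + by left; exact: nconn_trans h.
  + by right; left; split => //; exact: nconn_trans h2.
  + by right; right; split => //; exact: nconn_trans h2.
Qed.


Lemma has_cycle_cons e s : has_cycle s -> has_cycle (e :: s).
Proof.
move=> [idx [vs [h2 hs hu hv [ha hj]]]].
exists (map S idx), vs; rewrite size_map; split => //.
  by rewrite map_inj_uniq // => x y [].
split.
  by rewrite all_map; apply: sub_all ha => k /=.
move=> j hj'; rewrite (nth_map 0) //=; exact: hj.
Qed.

Lemma mem_remove (s : seq (nat*nat)) (p0 q : nat) :
  q < size s -> q != p0 -> nth (0,0) s q \in take p0 s ++ drop p0.+1 s.
Proof.
move=> hq hne; rewrite mem_cat; case: (ltnP q p0) => hqp.
  apply/orP; left; rewrite -(nth_take _ hqp); apply: mem_nth.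
  by rewrite size_take; case: ifP => //; lia.
apply/orP; right.
have hq' : p0 < q by rewrite ltn_neqAle eq_sym hne hqp.
rewrite (_ : q = p0.+1 + (q - p0.+1)); last by lia.
rewrite -nth_drop; apply: mem_nth; rewrite size_drop; move: (size s) hq hq' => n; lia.
Qed.

Lemma cycle_redundant s : has_cycle s ->
  exists s1 e s2, s = s1 ++ e :: s2 /\ nconn (s1 ++ s2) e.1 e.2.
Proof.
move=> [idx [vs [h2 hs hu hv [ha hj]]]].
set k := size idx in h2 hs hj.
have hk0 : 0 < k by lia.
set p0 := nth 0 idx 0.
have hp0 : p0 < size s by apply: (allP ha); apply: mem_nth.
exists (take p0 s), (nth (0,0) s p0), (drop p0.+1 s).
split; first by rewrite -(drop_nth _ hp0) cat_take_drop.
set t := take p0 s ++ drop p0.+1 s.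
have edge : forall j, 0 < j < k ->
    nadj t (nth 0 vs j) (nth 0 vs (j.+1 %% k)).
  move=> j /andP[j0 jk]; apply/hasP; exists (nth (0,0) s (nth 0 idx j)); last exact: hj.
  apply: mem_remove; first by apply: (allP ha); apply: mem_nth.
  by rewrite /p0 nth_uniq //; lia.
have claim : forall m j, j + m = k.-1 -> 0 < j -> nconn t (nth 0 vs j) (nth 0 vs 0).
  elim=> [|m IH] j hjm hj0.
    apply: nconn1; have := edge j; rewrite (_ : j.+1 = k); last by lia.
    by rewrite modnn; apply; lia.
  apply: nconn_trans (IH j.+1 _ _); [|lia|lia].
  apply: nconn1; have := edge j; rewrite modn_small; last by lia.
  by apply; lia.
have h10 : nconn t (nth 0 vs 1) (nth 0 vs 0) by apply: (claim k.-2); lia.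
have e01 := hj 0 hk0; rewrite modn_small /= in e01; last by lia.
by move: e01 => /joinsE[[-> ->]|[-> ->]] //; exact: nconn_sym.
Qed.

Lemma path_cycle a b t : a != b -> nconn t a b -> has_cycle ((a, b) :: t).
Proof.
move=> hab [p0 [hp0 hl0]].
case: (shortenP hp0) hl0 => p hp hu _ hl.
set vs := a :: p.
set m := size p.
have hm : 0 < m by move: hl hab; rewrite /m; case: p {hp hu vs m} => //= -> ; rewrite eqxx.
have hedge : forall j, j < m -> nadj t (nth 0 vs j) (nth 0 vs j.+1).
  by move=> j hj; move/(pathP 0): hp; apply.
set f := fun j => find (fun e => joins e (nth 0 vs j) (nth 0 vs j.+1)) t.
have hf : forall j, j < m -> f j < size t by move=> j hj; rewrite -has_find; exact: hedge.
have hfj : forall j, j < m -> joins (nth (0,0) t (f j)) (nth 0 vs j) (nth 0 vs j.+1).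
  by move=> j hj; exact: (nth_find (0,0) (hedge j hj)).
exists ([seq (f j).+1 | j <- iota 0 m] ++ [:: 0]), vs.
rewrite size_cat size_map size_iota /= addn1; split => //.
- rewrite cat_uniq /= andbT; apply/andP; split.
    rewrite map_inj_in_uniq ?iota_uniq // => j l; rewrite !mem_iota !add0n => hj hl' [] he.
    have := hfj j hj; rewrite he => h1; have := hfj l hl' => h2.
    have ltv : forall i, i <= m -> i < size vs by move=> i hi; rewrite /vs /= ltnS; exact: hi.
    case: (joins2 h1 h2) => [[e1 _]|[e1 e2]].
      by apply/eqP; rewrite -(nth_uniq 0 _ _ hu) ?e1 //; apply: ltv; lia.
    move/eqP: e1; rewrite (nth_uniq 0 _ _ hu); try (apply: ltv; lia).
    move/eqP: e2; rewrite (nth_uniq 0 _ _ hu); try (apply: ltv; lia).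
    by move=> /eqP e2 /eqP e1; lia.
  by rewrite orbF; apply/negP => /mapP[j _].
- split.
    rewrite all_cat /= andbT; apply/allP => x /mapP[j]; rewrite mem_iota add0n => hj ->.
    by rewrite /= ltnS; exact: hf.
  move=> j hj; case: (ltnP j m) => hjm.
    rewrite nth_cat size_map size_iota hjm (nth_map 0) ?size_iota // nth_iota // add0n /=.
    by rewrite modn_small; [exact: hfj | lia].
  have -> : j = m by lia.
  rewrite nth_cat size_map size_iota ltnn subnn /= modnn.
  by rewrite /vs -/m -last_nth hl /joins !eqxx orbT.
Qed.


Section Reps.
Variable n : nat.
Definition reps (R : rel 'I_n) : {set 'I_n} := [set x | [forall y, R x y ==> (x <= y)]].

Lemma repsP (R : rel 'I_n) x : reflect (forall y, R x y -> x <= y) (x \in reps R).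
Proof.
rewrite inE; apply: (iffP forallP) => h y; first by move=> hy; have := h y; rewrite hy.
by apply/implyP; exact: h.
Qed.

Lemma reps_sub (R R' : rel 'I_n) : (forall x y, R x y -> R' x y) -> reps R' \subset reps R.
Proof. move=> hs; apply/subsetP => x /repsP h; apply/repsP => y /hs; exact: h. Qed.

Variables (R R' : rel 'I_n) (a b : 'I_n).
Hypothesis Rsym : forall x y, R x y -> R y x.
Hypothesis Rtr : forall x y z, R x y -> R y z -> R x z.
Hypothesis Rrefl : forall x, R x x.
Hypothesis RR' : forall x y, R x y -> R' x y.
Hypothesis R'C : forall x y, R' x y -> R x y \/ (R x a /\ R b y) \/ (R x b /\ R a y).

Lemma out_rep x : x \in reps R -> x \notin reps R' ->
  exists y : 'I_n, y < x /\ ((R x a /\ R b y) \/ (R x b /\ R a y)).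
Proof.
move=> /repsP hx /repsP hx'.
have [y hy hyx] : exists2 y : 'I_n, R' x y & y < x.
  apply/exists_inP; apply/negP => /exists_inP hn; apply: hx' => y hy.
  by rewrite leqNgt; apply/negP => hlt; apply: hn; exists y.
exists y; split => //; case: (R'C hy) => [h|h] //.
by have := hx _ h; rewrite leqNgt hyx.
Qed.

Lemma card_reps_step : #|reps R| <= #|reps R'| + 1.
Proof.
have hsub := reps_sub RR'.
have hle : #|reps R :\: reps R'| <= 1.
  apply/card_le1_eqP => x1 x2; rewrite !in_setD => /andP[hx1' hx1] /andP[hx2' hx2].
  have [y1 [hy1 c1]] := out_rep hx1 hx1'.
  have [y2 [hy2 c2]] := out_rep hx2 hx2'.
  move/repsP: hx1 => r1; move/repsP: hx2 => r2.
  apply: val_inj => /=.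
  case: c1 => [[h1 h1']|[h1 h1']]; case: c2 => [[h2 h2']|[h2 h2']].
  - have := r2 _ (Rtr h2 (Rsym h1)); have := r1 _ (Rtr h1 (Rsym h2)); lia.
  - exfalso; have := r1 y2 (Rtr h1 h2'); have := r2 y1 (Rtr h2 h1'); lia.
  - exfalso; have := r1 y2 (Rtr h1 h2'); have := r2 y1 (Rtr h2 h1'); lia.
  - have := r2 _ (Rtr h2 (Rsym h1)); have := r1 _ (Rtr h1 (Rsym h2)); lia.
move: hle; rewrite cardsD (setIidPr hsub); lia.
Qed.

Hypothesis R'ab : R' a b.
Hypothesis R'sym : forall x y, R' x y -> R' y x.
Hypothesis R'tr : forall x y z, R' x y -> R' y z -> R' x z.
Hypothesis nRab : ~~ R a b.

Lemma card_reps_merge : #|reps R'| + 1 <= #|reps R|.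
Proof.
have hsub := reps_sub RR'.
have mrep : forall c : 'I_n, exists m, [/\ R c m, m \in reps R &
                  forall y, R c y -> m <= y].
  move=> c; case: (arg_minnP (P := R c) val (Rrefl c)) => m hm hmin.
  exists m; split => //; apply/repsP => y hy; apply: hmin; exact: Rtr hm hy.
have [ma [ha ra ma_min]] := mrep a; have [mb [hb rb mb_min]] := mrep b.
have hne : (ma : nat) != mb.
  apply/negP => /eqP /val_inj e; subst mb; by move: nRab; rewrite (Rtr ha (Rsym hb)).
have [m [hm hm']] : exists m, m \in reps R /\ m \notin reps R'.
  case: (ltngtP ma mb) hne => [lt|lt|eq] //= _.
  - exists mb; split => //; apply/repsP => h.
    have : R' mb ma.
      apply: R'tr (RR' (Rsym hb)) _; apply: R'tr (R'sym R'ab) (RR' ha).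
    move/h; lia.
  - exists ma; split => //; apply/repsP => h.
    have : R' ma mb.
      apply: R'tr (RR' (Rsym ha)) _; apply: R'tr R'ab (RR' hb).
    move/h; lia.
have : #|reps R :\: reps R'| >= 1.
  by apply/card_gt0P; exists m; rewrite in_setD hm hm'.
rewrite cardsD (setIidPr hsub); lia.
Qed.
End Reps.


Definition inrange n (s : seq (nat*nat)) := all (fun e => (e.1 < n) && (e.2 < n)) s.

Lemma nadj_inrange n s x y : inrange n s -> nadj s x y -> (x < n) && (y < n).
Proof.
move=> /allP hr /hasP[e /hr /andP[h1 h2] /joinsE[[<- <-]|[<- <-]]]; by rewrite ?h1 ?h2.
Qed.

Lemma bridge n s (x y : 'I_n) : inrange n s ->
  connect (@graph_adj n s) x y <-> nconn s x y.
Proof.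
move=> hr; split.
  move/connectP=> [p hp ->]; exists (map val p); split; last by rewrite last_map.
  by rewrite path_map.
move=> h.
suff : forall x' : 'I_n, val x' = val x -> connect (@graph_adj n s) x' y.
  by apply.
apply: (nconn_ind (P := fun z => forall x' : 'I_n, val x' = z -> connect (@graph_adj n s) x' y)) h.
  by move=> x' /val_inj ->; exact: connect0.
move=> a b hab _ IH x' hx'.
have /andP[_ hb] := nadj_inrange hr hab.
apply: (connect_trans (y := Ordinal hb)); last exact: IH.
apply: connect1; rewrite /graph_adj /=; move: hab; rewrite /nadj -hx'; exact.
Qed.

Definition cc n s := #|reps (connect (@graph_adj n s))|.

Lemma graph_adj_sym n s : symmetric (@graph_adj n s).
Proof. move=> x y; apply: eq_has => e; exact: joins_sym. Qed.

Lemma csym n s x y : connect (@graph_adj n s) x y -> connect (@graph_adj n s) y x.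
Proof. by rewrite (sym_connect_sym (@graph_adj_sym n s)). Qed.

Lemma ctr n s x y z : connect (@graph_adj n s) x y -> connect (@graph_adj n s) y z ->
  connect (@graph_adj n s) x z.
Proof. exact: connect_trans. Qed.

Lemma cc_nil n : cc n [::] = n.
Proof.
rewrite /cc (_ : reps _ = setT) ?cardsT ?card_ord //.
apply/setP => x; rewrite in_setT; apply/repsP => y /connectP[[|z p]] //= _ -> //.
Qed.

Lemma inrange_cons n e s : inrange n (e :: s) ->
  [/\ e.1 < n, e.2 < n & inrange n s].
Proof. by move=> /= /andP[/andP[-> ->] ->]. Qed.

Lemma cc_cons_le n e s : inrange n (e :: s) -> cc n s <= cc n (e :: s) + 1.
Proof.
move=> hr; have [h1 h2 hr'] := inrange_cons hr.
apply: (card_reps_step (a := Ordinal h1) (b := Ordinal h2)).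
- exact: csym.
- exact: ctr.
- move=> x y /(bridge _ _ hr') h; apply/(bridge _ _ hr); apply: nconn_sub h => z hz.
  by rewrite inE hz orbT.
- move=> x y /(bridge _ _ hr) /nconn_cons.
  by move=> [h|[[h h']|[h h']]]; [left|right;left|right;right]; rewrite ?(bridge _ _ hr').
Qed.

Lemma cc_cons_merge n e s : inrange n (e :: s) -> ~ nconn s e.1 e.2 ->
  cc n (e :: s) + 1 <= cc n s.
Proof.
move=> hr hn; have [h1 h2 hr'] := inrange_cons hr.
apply: (card_reps_merge (a := Ordinal h1) (b := Ordinal h2)).
- exact: csym.
- exact: ctr.
- exact: connect0.
- move=> x y /(bridge _ _ hr') h; apply/(bridge _ _ hr); apply: nconn_sub h => z hz.
  by rewrite inE hz orbT.
- apply: connect1; rewrite /graph_adj /= /joins !eqxx //.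
- exact: csym.
- exact: ctr.
- by apply/negP => /(bridge _ _ hr').
Qed.

Lemma cc_pos n s : 0 < n -> 0 < cc n s.
Proof.
move=> hn; apply/card_gt0P; exists (Ordinal hn); apply/repsP => y _ //.
Qed.

Lemma cc_conn n s : (forall x y : 'I_n, connect (@graph_adj n s) x y) -> cc n s <= 1.
Proof.
move=> hc; apply/card_le1_eqP => x y /repsP hx /repsP hy.
apply: ord_inj; have := hx y (hc _ _); have := hy x (hc _ _); lia.
Qed.

Lemma acyc_count n s : inrange n s -> all (fun e => e.1 != e.2) s -> ~ has_cycle s ->
  cc n s + size s = n.
Proof.
elim: s => [|e s IH] hr hl hc; first by rewrite cc_nil addn0.
have [h1 h2 hr'] := inrange_cons hr.
move: hl => /= /andP[hne hl].
have IH' := IH hr' hl (fun h => hc (has_cycle_cons e h)).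
have hn : ~ nconn s e.1 e.2.
  move=> h; apply: hc; have := path_cycle hne h; by case: e {hr h1 h2 hne h IH IH'}.
have := cc_cons_merge hr hn; have := cc_cons_le hr; rewrite /=; lia.
Qed.

Lemma count_lb n s : inrange n s -> n <= cc n s + size s.
Proof.
elim: s => [|e s IH] hr; first by rewrite cc_nil addn0.
have [h1 h2 hr'] := inrange_cons hr.
have := IH hr'; have := cc_cons_le hr; rewrite /=; lia.
Qed.

Definition tc n (s : seq (nat*nat)) :=
  [/\ 0 < n, all (fun e => [&& e.1 < n, e.2 < n & e.1 != e.2]) s,
      (forall x y, x < n -> y < n -> nconn s x y) & size s = n.-1].

Lemma all3 n s : all (fun e => [&& e.1 < n, e.2 < n & e.1 != e.2]) s ->
  inrange n s /\ all (fun e => e.1 != e.2) s.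
Proof.
move=> h; split; apply: sub_all h => e /and3P[a b c]; by rewrite ?a ?b ?c.
Qed.

Lemma tree_tc n s : is_spanning_tree n s -> tc n s.
Proof.
move=> [hn ha hc hcy]; have [hr hl] := all3 ha.
have hc' : forall x y, x < n -> y < n -> nconn s x y.
  move=> x y hx hy; exact: (bridge (Ordinal hx) (Ordinal hy) hr).1 (hc _ _).
split => //.
have := acyc_count hr hl hcy; have := cc_pos s hn; have := cc_conn hc; lia.
Qed.

Lemma tc_tree n s : tc n s -> is_spanning_tree n s.
Proof.
move=> [hn ha hc hsz]; have [hr hl] := all3 ha.
split => //.
  move=> x y; apply/(bridge _ _ hr); exact: hc.
move=> /cycle_redundant [s1 [e [s2 [hs he]]]].
set t := s1 ++ s2 in he.
have hp : perm_eq s (e :: t) by rewrite hs /t -cat1s perm_catCA.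
have hrt : inrange n t.
  apply/allP => z hz; apply: (allP hr); by rewrite (perm_mem hp) inE hz orbT.
have hct : forall x y : 'I_n, connect (@graph_adj n t) x y.
  move=> x y; apply/(bridge _ _ hrt); apply: (nconn_redundant (e := e)) => //.
  apply: nconn_perm hp _; exact: hc.
have := count_lb hrt; have := cc_conn hct.
have := perm_size hp; rewrite hsz /=; lia.
Qed.


Definition bij N (s t : nat -> nat) :=
  forall x, x < N -> [/\ s x < N, t x < N, t (s x) = x & s (t x) = x].
Definition relab2 (f : nat -> nat) (e : nat * nat) := (f e.1, f e.2).
Definition relab (f : nat -> nat) (e : nat * nat * nat) := (relab2 f e.1, e.2).
Definition rel_iso (G H : tdec) := nv G = nv H /\
  exists f g, bij (nv G) f g /\ perm_eq (edges H) (map (relab f) (edges G)).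

Lemma nadj_relab f s a b : nadj s a b -> nadj (map (relab2 f) s) (f a) (f b).
Proof.
move=> /hasP[e he hj]; apply/hasP; exists (relab2 f e); first exact: map_f.
by case/joinsE: hj => -[<- <-]; rewrite /joins /= !eqxx ?orbT.
Qed.

Lemma tc_relab N f g s t : bij N f g -> tc N s -> perm_eq t (map (relab2 f) s) -> tc N t.
Proof.
move=> hb [hn ha hc hsz] hp; split => //.
- apply/allP => z; rewrite (perm_mem hp) => /mapP[e he ->] /=.
  have /and3P[h1 h2 h3] := allP ha e he.
  have [f1 _ g1 _] := hb _ h1; have [f2 _ g2 _] := hb _ h2.
  rewrite f1 f2 /=; apply/negP => /eqP he'; move/negP: h3; apply; apply/eqP.
  by rewrite -g1 -g2 he'.
- move=> x y hx hy; have [_ gx _ fx] := hb _ hx; have [_ gy _ fy] := hb _ hy.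
  have [p [hpp hl]] := hc _ _ gx gy.
  have hp' : perm_eq (map (relab2 f) s) t by rewrite perm_sym.
  apply: (nconn_perm hp'); exists (map f p); split.
    rewrite -{1}fx path_map; apply: sub_path hpp => a b; exact: nadj_relab.
  by rewrite -fx last_map hl fy.
- by rewrite (perm_size hp) size_map.
Qed.

Lemma color_relab f E i : color_class (map (relab f) E) i = map (relab2 f) (color_class E i).
Proof. elim: E => [|e E IH] //=; rewrite /color_class /=; case: ifP => _ //=; by rewrite -IH. Qed.

Lemma color_perm E E' i : perm_eq E E' -> perm_eq (color_class E i) (color_class E' i).
Proof. move=> h; apply: perm_map; exact: perm_filter. Qed.

Lemma mem_color E e : e \in E -> e.1 \in color_class E e.2.
Proof. move=> h; apply: map_f; by rewrite mem_filter eqxx. Qed.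

Lemma tdec_edge d G e : is_tdec d G -> e \in edges G ->
  [/\ e.1.1 < nv G, e.1.2 < nv G, e.1.1 != e.1.2 & e.2 < d].
Proof.
move=> [h1 h2] he; have [_ hd] := h1 e he.
have [_ ha _ _] := h2 _ hd; have /and3P[a b c] := allP ha _ (mem_color he).
by split.
Qed.

Lemma tdec_relab d G H : is_tdec d G -> rel_iso G H -> is_tdec d H.
Proof.
move=> hG [hn [f [g [hb hp]]]]; split.
  move=> e; rewrite (perm_mem hp) => /mapP[e0 he0 ->] /=.
  have [a b c dd] := tdec_edge hG he0; split => //.
  have [f1 _ g1 _] := hb _ a; have [f2 _ g2 _] := hb _ b.
  apply/negP => /eqP he'; move/negP: c; apply; apply/eqP.
  by rewrite -g1 -g2 he'.
move=> i hi; rewrite -hn; apply: tc_tree; apply: (tc_relab hb (tree_tc (hG.2 i hi))).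
by rewrite -color_relab; exact: color_perm.
Qed.

Lemma bij_comp N f g f' g' : bij N f g -> bij N f' g' -> bij N (f' \o f) (g \o g').
Proof.
move=> h h' x hx; have [a b c dd] := h _ hx; have [a' b' c' d'] := h' _ hx.
have [a2 _ c2 _] := h' _ a; have [_ b2 _ d2] := h _ b'.
by split => //=; rewrite ?c2 ?c ?d2 ?d'.
Qed.

Lemma rel_iso_trans G H K : rel_iso G H -> rel_iso H K -> rel_iso G K.
Proof.
move=> [n1 [f [g [hb hp]]]] [n2 [f' [g' [hb' hp']]]]; split; first by rewrite n1.
exists (f' \o f), (g \o g'); split; first by apply: bij_comp => //; rewrite n1.
apply: (perm_trans hp'); rewrite (_ : map (relab (f' \o f)) (edges G) = map (relab f') (map (relab f) (edges G))).
  exact: perm_map.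
by rewrite -map_comp.
Qed.

Lemma rel_iso_tdec_iso d G H : is_tdec d G -> rel_iso G H -> tdec_iso H G.
Proof.
move=> hG [hn [f [g [hb hp]]]].
have hs : size (edges H) = size (edges G) by rewrite (perm_size hp) size_map.
split; first by []. split; first by [].
have [Is hIs hE] := perm_iotaP (0,0,0) hp.
have hsI : size Is = size (edges H) by rewrite hE size_map.
have uI : uniq Is by rewrite (perm_uniq hIs) iota_uniq.
have hI : forall k, k < size (edges H) -> nth 0 Is k < size (edges G).
  move=> k hk; have : nth 0 Is k \in iota 0 (size (map (relab f) (edges G))).
    by rewrite -(perm_mem hIs) mem_nth // hsI.
  by rewrite mem_iota size_map.
exists g, (fun k => nth 0 Is k); split.
- move=> x y; rewrite !inE -hn => hx hy e.
  have [_ _ _ fx] := hb _ hx; have [_ _ _ fy] := hb _ hy; by rewrite -fx e fy.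
- by move=> x; rewrite -hn => hx; have [] := hb _ hx.
- move=> x y; rewrite !inE => hx hy /eqP; rewrite nth_uniq ?hsI //; by move/eqP.
- exact: hI.
- move=> k hk /=.
  have e1 : nth (0,0,0) (edges H) k = relab f (nth (0,0,0) (edges G) (nth 0 Is k)).
    by rewrite {1}hE (nth_map 0) ?hsI // (nth_map (0,0,0)) // hI.
  rewrite e1 /=.
  have [a b _ _] := tdec_edge hG (mem_nth (0,0,0) (hI _ hk)).
  have [_ _ ga _] := hb _ a; have [_ _ gb _] := hb _ b.
  by rewrite ga gb /joins !eqxx.
Qed.


Definition touch2 (v : nat) (e : nat * nat) := (e.1 == v) || (e.2 == v).
Definition oth (v : nat) (e : nat * nat) := if e.1 == v then e.2 else e.1.
Definition nbrs v (C : seq (nat * nat)) := [seq oth v e | e <- C & touch2 v e].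
Definition starl (U : seq nat) := [seq (head 0 U, u) | u <- behead U].

Lemma two_pos (T : Type) (x0 : T) (P : pred T) s : 1 < count P s ->
  exists p q, [/\ p < q, q < size s, P (nth x0 s p) & P (nth x0 s q)].
Proof.
elim: s => [|x s IH] //=; case hx : (P x) => /=.
  rewrite add1n ltnS -has_count => hs.
  exists 0, (find P s).+1; split => //=; first by rewrite ltnS -has_find.
  exact: nth_find.
rewrite add0n => /IH [p [q [h1 h2 h3 h4]]]; exists p.+1, q.+1; by split.
Qed.

Lemma double_cycle C (n u : nat) : u != n -> 1 < count (fun e => joins e n u) C -> has_cycle C.
Proof.
move=> hu /(two_pos (0,0)) [p [q [hpq hq h1 h2]]].
exists [:: p; q], [:: n; u]; split => //=.
- rewrite inE andbT; apply/eqP => e; rewrite e in hpq; by rewrite ltnn in hpq.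
- by rewrite inE eq_sym hu.
- split; first by rewrite hq andbT (ltn_trans hpq hq).
  by move=> [|[|]] //= _; rewrite // joins_sym.
Qed.

Lemma count_nbrs C (n u : nat) : u != n ->
  count_mem u (nbrs n C) = count (fun e => joins e n u) C.
Proof.
move=> hu; rewrite /nbrs count_map count_filter; apply: eq_count => -[a b].
rewrite /preim /predI /= /oth /touch2 /joins /=.
case: (eqVneq a n) => [->|ha]; case: (eqVneq b n) => [->|hb] //=; rewrite ?eqxx /=.
- by rewrite !andbT orbb.
- by rewrite andbT andbF orbF.
Qed.

Lemma oth_prop (n : nat) e : touch2 n e -> e.1 < n.+1 -> e.2 < n.+1 -> e.1 != e.2 ->
  oth n e < n /\ joins e n (oth n e).
Proof.
case: e => a b; rewrite /touch2 /oth /joins /=.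
case: (eqVneq a n) => [->|ha] /=; case: (eqVneq b n) => [->|hb] //=; rewrite ?eqxx ?orbT //;
  move=> _ h1 h2 h3; split => //; lia.
Qed.

Lemma reduce n C : 0 < n -> is_spanning_tree n.+1 C ->
  [/\ 0 < size (nbrs n C), uniq (nbrs n C), all (fun u => u < n) (nbrs n C) &
      tc n ([seq e <- C | ~~ touch2 n e] ++ starl (nbrs n C))].
Proof.
move=> hn hT; have [_ ha hc hsz] := tree_tc hT; case: hT => _ _ _ hcy.
set U := nbrs n C; set Nc := [seq e <- C | ~~ touch2 n e].
have hU : forall u, u \in U -> u < n.
  move=> u /mapP [e]; rewrite mem_filter => /andP[ht he] ->.
  have /and3P[h1 h2 h3] := allP ha e he; by case: (oth_prop ht h1 h2 h3).
have key : forall x, x < n.+1 -> x != n -> exists2 u, u \in U & nconn Nc x u.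
  move=> x hx hxn; have h := hc x n hx (ltnSn n).
  apply: (nconn_ind (P := fun x => x != n -> exists2 u, u \in U & nconn Nc x u)) h hxn.
    by rewrite eqxx.
  move=> a b hab _ IH han; case: (eqVneq b n) => [hb|hbn].
    subst b; move/hasP: hab => [e he hj]; exists a; last exact: nconn_refl.
    apply/mapP; exists e.
      rewrite mem_filter he andbT /touch2.
      by case/joinsE: hj => -[-> ->]; rewrite eqxx ?orbT.
    rewrite /oth; case/joinsE: hj => -[-> ->]; by rewrite ?eqxx ?(negbTE han).
  have [u hu hbu] := IH hbn; exists u => //; apply: nconn_trans hbu; apply: nconn1.
  move/hasP: hab => [e he hj]; apply/hasP; exists e => //.
  rewrite mem_filter he andbT /touch2.
  by case/joinsE: hj => -[-> ->]; rewrite negb_or han hbn.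
have hpos : 0 < size U.
  have [u hu _] := key 0 (ltn0Sn n) (negbT (ltn_eqF hn)).
  by move: hu; case: (U).
have huniq : uniq U.
  apply: count_mem_uniq => x.
  have c0 : (0 < count_mem x U) = (x \in U) by rewrite -has_count has_pred1.
  have c2 : count_mem x U <= 1.
    rewrite leqNgt; apply/negP => c2.
    have hx : x \in U by rewrite -c0; apply: ltnW.
    have hxn : x != n by have := hU x hx; rewrite neq_ltn => ->.
    by apply: hcy; apply: (double_cycle hxn); rewrite -count_nbrs.
  case hxu : (x \in U); rewrite hxu in c0; move: c0 c2 => /= c0 c2; lia.
have [h [t eU]] : exists h t, U = h :: t by move: hpos; case: (U) => // h t; exists h, t.
split => //; first by apply/allP.
have hh : h \in U by rewrite eU mem_head.
have ht : forall u, u \in t -> u \in U by move=> u hu; rewrite eU inE hu orbT.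
have hst : starl U = [seq (h, u) | u <- t] by rewrite eU.
split => //.
- rewrite all_cat; apply/andP; split.
    apply/allP => e; rewrite mem_filter => /andP[hnt he].
    have /and3P[h1 h2 h3] := allP ha e he.
    move: hnt; rewrite /touch2 negb_or => /andP[n1 n2]; rewrite h3 andbT.
    apply/andP; split; lia.
  rewrite hst; apply/allP => e /mapP[u hu ->] /=.
  rewrite (hU _ hh) (hU _ (ht _ hu)) /=.
  move: huniq; rewrite eU /= => /andP[hnot _]; apply/negP => /eqP e'.
  by move: hnot; rewrite e' hu.
- have toh : forall x, x < n -> nconn (Nc ++ starl U) x h.
    move=> x hx; have [u hu hxu] := key x (ltnW hx) (negbT (ltn_eqF hx)).
    apply: nconn_trans (nconn_sub _ hxu) _; first by move=> z hz; rewrite mem_cat hz.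
    move: hu; rewrite eU inE => /orP[/eqP ->|hu]; first exact: nconn_refl.
    apply: nconn_sym; apply: nconn1; apply/hasP; exists (h, u).
      by rewrite mem_cat /starl /= map_f ?orbT.
    by rewrite /joins /= !eqxx.
  move=> x y hx hy; apply: nconn_trans (toh _ hx) (nconn_sym (toh _ hy)).
- rewrite size_cat hst size_map.
  have e1 : size U = count (touch2 n) C by rewrite /U /nbrs size_map size_filter.
  have e2 : size Nc = count (predC (touch2 n)) C by rewrite size_filter.
  have e3 := count_predC (touch2 n) C.
  move: e1 e2 e3; rewrite eU /= hsz /=; lia.
Qed.


Lemma sum_eq1 N (x : nat) : \sum_(0 <= v < N) (x == v : nat) = (x < N).
Proof.
elim: N => [|N IH]; first by rewrite big_geq.
rewrite big_nat_recr //= IH ltnS (leq_eqVlt x N).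
case: (eqVneq x N) => [->|hne] /=; first by rewrite ltnn.
by rewrite addn0.
Qed.

Lemma sum_count_gen (T : eqType) (P : nat -> pred T) (w : T -> nat) N s :
  (forall e, e \in s -> \sum_(0 <= v < N) (P v e : nat) = w e) ->
  \sum_(0 <= v < N) count (P v) s = \sum_(e <- s) w e.
Proof.
elim: s => [|e s IH] hw; first by rewrite big_nil big1.
rewrite big_cons -(hw e (mem_head _ _)) -IH; last by move=> x hx; apply: hw; rewrite inE hx orbT.
by rewrite -big_split.
Qed.

Lemma sum_bool_count (T : Type) (b : pred T) s : \sum_(e <- s) (b e : nat) = count b s.
Proof. elim: s => [|e s IH]; by rewrite ?big_nil // big_cons IH. Qed.


Lemma size_color E c : size (color_class E c) = count (fun e => e.2 == c) E.
Proof. by rewrite /color_class size_map size_filter. Qed.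

Lemma sum_const_seq (T : Type) (s : seq T) k : \sum_(e <- s) k = k * size s.
Proof. elim: s => [|e s IH]; rewrite ?big_nil ?muln0 // big_cons IH /=; lia. Qed.

Lemma tdec_size d G n : is_tdec d G -> nv G = n.+1 -> size (edges G) = d * n.
Proof.
move=> hG hn.
have h1 : \sum_(0 <= c < d) count (fun e => e.2 == c) (edges G) = \sum_(e <- edges G) 1.
  apply: (sum_count_gen (P := fun c (e : nat * nat * nat) => e.2 == c)) => e he.
  by rewrite sum_eq1; have [_ _ _ ->] := tdec_edge hG he.
have h2 : \sum_(0 <= c < d) count (fun e => e.2 == c) (edges G) = \sum_(0 <= c < d) n.
  rewrite big_nat_cond [RHS]big_nat_cond; apply: eq_bigr => c /andP[/andP[_ hc] _].
  have [_ _ _ hs] := tree_tc (hG.2 c hc); by rewrite -size_color hs hn.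
by rewrite -sum1_size -h1 h2 sum_nat_const_nat subn0.
Qed.

Lemma low_degree d G n : 0 < d -> is_tdec d G -> nv G = n.+1 ->
  exists2 v, v < n.+1 & count (fun e => touch2 v e.1) (edges G) < 2 * d.
Proof.
move=> hd hG hn.
have hdeg : \sum_(0 <= v < n.+1) count (fun e => touch2 v e.1) (edges G) = \sum_(e <- edges G) 2.
  apply: (sum_count_gen (P := fun v (e : nat * nat * nat) => touch2 v e.1)) => e he.
  have [a b c _] := tdec_edge hG he; rewrite hn in a b.
  rewrite (eq_bigr (fun v => (e.1.1 == v : nat) + (e.1.2 == v))); last first.
    move=> v _; rewrite /touch2; case: (eqVneq e.1.1 v) => [hv|] //=.
    by rewrite -hv eq_sym (negbTE c).
  by rewrite big_split /= !sum_eq1 a b.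
rewrite sum_const_seq (tdec_size hG hn) in hdeg.
case hh : (has (fun v => count (fun e => touch2 v e.1) (edges G) < 2 * d) (iota 0 n.+1)).
  by move/hasP: hh => [v]; rewrite mem_iota => /andP[_ hv] h; exists v.
exfalso; move/hasPn: hh => hh.
have : \sum_(0 <= v < n.+1) 2 * d <= \sum_(0 <= v < n.+1) count (fun e => touch2 v e.1) (edges G).
  rewrite big_nat_cond [X in _ <= X]big_nat_cond; apply: leq_sum => v /andP[/andP[_ hv] _].
  by rewrite leqNgt; apply: hh; rewrite mem_iota add0n hv.
rewrite hdeg sum_nat_const_nat subn0; nia.
Qed.


Definition Nn n (E : seq (nat*nat*nat)) := [seq e <- E | ~~ touch2 n e.1].
Definition Tt n (E : seq (nat*nat*nat)) := [seq e <- E | touch2 n e.1].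
Definition Uc n E c := nbrs n (color_class E c).
Definition Fc n E c : seq (nat*nat*nat) := [seq (x, c) | x <- starl (Uc n E c)].
Definition Fall n d E := flatten [seq Fc n E c | c <- iota 0 d].

Lemma color_cat E1 E2 c : color_class (E1 ++ E2) c = color_class E1 c ++ color_class E2 c.
Proof. by rewrite /color_class filter_cat map_cat. Qed.

Lemma color_Nn n E c : color_class (Nn n E) c = [seq e <- color_class E c | ~~ touch2 n e].
Proof.
elim: E => [|e E IH] //; rewrite /Nn /color_class /= in IH *.
by case ht: (touch2 n e.1); case hc: (e.2 == c) => /=; rewrite ?ht ?hc /= ?IH.
Qed.

Lemma color_Fc n E c' c : color_class (Fc n E c') c = if c' == c then starl (Uc n E c') else [::].
Proof.
rewrite /color_class /Fc filter_map; case: (eqVneq c' c) => [->|hne].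
  by rewrite (eq_filter (a2 := predT)) ?filter_predT -?map_comp ?map_id // => x; rewrite /preim /= eqxx.
by rewrite (eq_filter (a2 := pred0)) ?filter_pred0 // => x; rewrite /preim /= (negbTE hne).
Qed.

Lemma color_flatten n E c s : uniq s ->
  color_class (flatten [seq Fc n E c' | c' <- s]) c = if c \in s then starl (Uc n E c) else [::].
Proof.
elim: s => [|c' s IH] //= /andP[hn hu]; rewrite color_cat IH // color_Fc inE.
case: (eqVneq c' c) => [e|hne] /=.
  by subst c'; rewrite (negbTE hn) cats0.
by [].
Qed.

Lemma color_Fall n d E c : c < d -> color_class (Fall n d E) c = starl (Uc n E c).
Proof. by move=> hc; rewrite /Fall color_flatten ?iota_uniq // mem_iota hc. Qed.

Lemma count_Fall n d E c : c < d -> count (fun e => e.2 == c) (Fall n d E) = (size (Uc n E c)).-1.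
Proof. by move=> hc; rewrite -size_color color_Fall // /starl size_map size_behead. Qed.

Lemma count_Tt n E c : count (fun e => e.2 == c) (Tt n E) = size (Uc n E c).
Proof.
rewrite /Tt /Uc /nbrs size_map size_filter count_filter /color_class count_map count_filter.
by apply: eq_count => e; rewrite /predI /preim /= andbC.
Qed.

Lemma size_Fall n d E : size (Fall n d E) = \sum_(0 <= c < d) (size (Uc n E c)).-1.
Proof.
rewrite /Fall size_flatten /shape -map_comp sumnE big_map /index_iota subn0.
by apply: eq_bigr => c _; rewrite /comp /Fc /starl 2!size_map size_behead.
Qed.

Lemma size_Tt n d E : all (fun e => e.2 < d) E ->
  size (Tt n E) = \sum_(0 <= c < d) size (Uc n E c).
Proof.
move=> ha; rewrite -(eq_bigr _ (fun c _ => count_Tt n E c)).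
rewrite /Tt size_filter.
rewrite (sum_count_gen (P := fun c (e : nat*nat*nat) => e.2 == c) (w := fun e => touch2 n e.1)).
  by rewrite sum_bool_count count_filter; apply: eq_count => e /=; rewrite andbb.
move=> e he; rewrite /Tt mem_filter in he; case/andP: he => ht he.
by rewrite sum_eq1 (allP ha e he) ht.
Qed.

Lemma mem_Fall n d E f : f \in Fall n d E ->
  f.2 < d /\ exists2 u, u \in behead (Uc n E f.2) & f.1 = (head 0 (Uc n E f.2), u).
Proof.
move=> /flatten_mapP[c]; rewrite mem_iota add0n => /andP[_ hc] /mapP[x /mapP[u hu ->] ->] /=.
by split => //; exists u.
Qed.

Lemma G0_tdec d n G1 : 0 < n -> is_tdec d G1 -> nv G1 = n.+1 ->
  is_tdec d (TDec n (Nn n (edges G1) ++ Fall n d (edges G1))).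
Proof.
move=> hn hG hv; set E := edges G1.
have hc : forall c, c < d -> tc n (color_class (Nn n E ++ Fall n d E) c).
  move=> c hcd; rewrite color_cat color_Nn color_Fall //.
  have hT := hG.2 c hcd; rewrite hv in hT.
  by case: (reduce hn hT).
split; last by move=> i hi; apply: tc_tree; exact: hc.
move=> e he.
have hd : e.2 < d.
  move: he; rewrite mem_cat => /orP[|/mem_Fall[] //].
  by rewrite mem_filter => /andP[_ /(tdec_edge hG)[]].
split => //.
have [_ ha _ _] := hc _ hd.
by have /and3P[_ _ ->] := allP ha _ (mem_color he).
Qed.

Lemma Uc_props d n G1 c : 0 < n -> is_tdec d G1 -> nv G1 = n.+1 -> c < d ->
  [/\ 0 < size (Uc n (edges G1) c), uniq (Uc n (edges G1) c) &
      all (fun u => u < n) (Uc n (edges G1) c)].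
Proof.
move=> hn hG hv hcd; have hT := hG.2 c hcd; rewrite hv in hT.
by case: (reduce hn hT).
Qed.

Lemma Uc_nb d n G1 c x : is_tdec d G1 -> nv G1 = n.+1 -> x \in Uc n (edges G1) c ->
  exists2 a, a \in Tt n (edges G1) & (a.2 = c /\ joins a.1 n x).
Proof.
move=> hG hv /mapP[e']; rewrite mem_filter => /andP[ht /mapP[a]].
rewrite mem_filter => /andP[/eqP hac ha] he' ->; subst e'.
exists a; first by rewrite mem_filter ht ha.
have [h1 h2 h3 _] := tdec_edge hG ha; rewrite hv in h1 h2.
by split => //; case: (oth_prop ht h1 h2 h3).
Qed.

Lemma Fall_nb d n G1 f : 0 < n -> is_tdec d G1 -> nv G1 = n.+1 -> f \in Fall n d (edges G1) ->
  forall x, x = f.1.1 \/ x = f.1.2 ->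
  x < n /\ exists2 a, a \in Tt n (edges G1) & (a.2 = f.2 /\ joins a.1 n x).
Proof.
move=> hn hG hv /mem_Fall [hd [u hu hf]] x hx.
have [hpos _ hall] := Uc_props hn hG hv hd.
have hxU : x \in Uc n (edges G1) f.2.
  move: hx hpos hu; rewrite hf /=; case: (Uc n (edges G1) f.2) => [|h t] //= [->|->] _ hu.
    by rewrite mem_head.
  by rewrite inE hu orbT.
split; first exact: (allP hall).
exact: Uc_nb hG hv hxU.
Qed.

Lemma Tt_orient d n G1 a : is_tdec d G1 -> nv G1 = n.+1 -> a \in Tt n (edges G1) ->
  ((a.1.1 == n) && (a.1.2 < n)) || ((a.1.2 == n) && (a.1.1 < n)).
Proof.
move=> hG hv; rewrite mem_filter => /andP[ht ha].
have [h1 h2 h3 _] := tdec_edge hG ha; rewrite hv in h1 h2.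
move: ht h3; rewrite /touch2; case: (eqVneq a.1.1 n) => [e|ne] /=.
  move=> _ h; have h4 : a.1.2 != n by rewrite -e eq_sym.
  have h5 : a.1.2 < n by rewrite ltn_neqAle h4 -ltnS h2.
  by rewrite h5.
move=> /eqP e _; have h5 : a.1.1 < n by rewrite ltn_neqAle ne -ltnS h1.
by rewrite e eqxx h5 /=.
Qed.

Lemma Nn_range d n G1 e : is_tdec d G1 -> nv G1 = n.+1 -> e \in Nn n (edges G1) ->
  e.1.1 < n /\ e.1.2 < n.
Proof.
move=> hG hv; rewrite mem_filter /touch2 negb_or => /andP[/andP[n1 n2] he].
have [h1 h2 _ _] := tdec_edge hG he; rewrite hv in h1 h2.
by split; rewrite ltn_neqAle ?n1 ?n2 -ltnS ?h1 ?h2.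
Qed.


Lemma ptr (T : eqType) (s1 s2 s3 : seq T) : perm_eq s1 s2 -> perm_eq s2 s3 -> perm_eq s1 s3.
Proof. exact: perm_trans. Qed.
Lemma psym (T : eqType) (s1 s2 : seq T) : perm_eq s1 s2 -> perm_eq s2 s1.
Proof. by rewrite perm_sym. Qed.

Lemma perm_mask (T : eqType) (t a b : seq T) : perm_eq t (a ++ b) ->
  exists m, [/\ size m = size t, perm_eq (mask m t) a & perm_eq (mask (map negb m) t) b].
Proof.
elim: t a b => [|x t IH] a b hp.
  have := perm_size hp; rewrite size_cat /=; case: a b {hp} => [|? ?] [|? ?] //= _.
  by exists [::].
have hx : x \in a ++ b by rewrite -(perm_mem hp) mem_head.
case hxa : (x \in a).
  have h1 : perm_eq t (rem x a ++ b).
    rewrite -(perm_cons x); apply: ptr hp _.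
    by rewrite -cat_cons; apply: perm_cat => //; exact: perm_to_rem.
  have [m [hm1 hm2 hm3]] := IH _ _ h1; exists (true :: m); split => /=; first by rewrite hm1.
    by apply: ptr (psym (perm_to_rem hxa)); rewrite perm_cons.
  done.
have hxb : x \in b by move: hx; rewrite mem_cat hxa.
have h1 : perm_eq t (a ++ rem x b).
  rewrite -(perm_cons x); apply: ptr hp _.
  apply: ptr (perm_cat (perm_refl a) (perm_to_rem hxb)) _.
  by rewrite -cat1s perm_catCA.
have [m [hm1 hm2 hm3]] := IH _ _ h1; exists (false :: m); split => /=; first by rewrite hm1.
  done.
by apply: ptr (psym (perm_to_rem hxb)); rewrite perm_cons.
Qed.

Lemma joins_relab f e x y : joins e x y -> joins (relab2 f e) (f x) (f y).
Proof. by case/joinsE => -[<- <-]; rewrite /joins /= !eqxx ?orbT. Qed.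

Lemma count_relab f (s : seq (nat*nat*nat)) c :
  count (fun e => e.2 == c) (map (relab f) s) = count (fun e => e.2 == c) s.
Proof. by rewrite count_map. Qed.

Definition sw (v N x : nat) := if x == v then N else if x == N then v else x.

Lemma sw_invol v N x : sw v N (sw v N x) = x.
Proof.
rewrite /sw; case: (eqVneq v N) => [e|h3].
  subst v; case: (eqVneq x N) => [->|h]; rewrite ?eqxx //.
  by rewrite (negbTE h) /=.
have h3' : (N == v) = false by rewrite eq_sym (negbTE h3).
case: (eqVneq x v) => [->|h1]; first by do 3 rewrite ?eqxx ?h3' /=.
case: (eqVneq x N) => [->|h2]; first by do 3 rewrite ?eqxx ?h3' /=.
by do 3 rewrite ?(negbTE h1) ?(negbTE h2) /=.
Qed.

Lemma sw_lt v N x : v < N.+1 -> x < N.+1 -> sw v N x < N.+1.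
Proof. by rewrite /sw => hv hx; case: ifP => _ //; case: ifP. Qed.

Lemma bij_sw v N : v < N.+1 -> bij N.+1 (sw v N) (sw v N).
Proof. by move=> hv x hx; rewrite !sw_invol !sw_lt. Qed.

Lemma sw_eqN v N x : (sw v N x == N) = (x == v).
Proof.
rewrite /sw; case: (eqVneq x v) => [e|h1]; first by subst x; rewrite eqxx.
case: (eqVneq x N) => [e|h2]; last by rewrite (negbTE h2).
by subst x; rewrite eq_sym (negbTE h1).
Qed.

Lemma main_ind d : 0 < d -> forall n G, nv G = n.+1 -> is_tdec d G ->
  exists s : seq tdec,
    [/\ (forall i, i < size s -> is_tdec d (nth K1 s i)),
        (forall i, i < size s ->
           exists2 j, j <= d - 1 & tree_ext d (nth K1 (K1 :: s) i) (nth K1 s i) j)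
      & rel_iso G (last K1 s)].
Proof.
move=> hd; elim=> [|n IH] G hv hG.
  exists [::]; split => //.
  have hE : edges G = [::].
    case hE: (edges G) => [|e E] //.
    have he : e \in edges G by rewrite hE mem_head.
    have [a b c _] := tdec_edge hG he; rewrite hv in a b.
    by move: a b c; rewrite !ltnS !leqn0 => /eqP -> /eqP ->; rewrite eqxx.
  split; first by rewrite hv.
  exists id, id; split; first by move=> x hx; split.
  by rewrite hE.
set N := n.+1.
have [v hvlt hdeg] := low_degree hd hG hv.
set G1 := TDec N.+1 (map (relab (sw v N)) (edges G)).
have r1 : rel_iso G G1.
  split; first by rewrite hv.
  exists (sw v N), (sw v N); split; last by [].
  by rewrite hv; exact: bij_sw.
have hG1 : is_tdec d G1 := tdec_relab hG r1.
have hv1 : nv G1 = N.+1 by [].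
have hdeg1 : count (fun e => touch2 N e.1) (edges G1) < 2 * d.
  rewrite /G1 /= count_map (eq_count (a2 := fun e => touch2 v e.1)) //.
  by move=> e; rewrite /preim /touch2 /= !sw_eqN.
set E := edges G1.
have hN : 0 < N by [].
have hG0 := G0_tdec hN hG1 hv1.
have [s0 [c1 c2 r0]] := IH _ (erefl : nv (TDec N (Nn N (edges G1) ++ Fall N d (edges G1))) = n.+1) hG0.
set H0 := last K1 s0.
case: r0 => /= hvH0 [f0 [g0 [hb0 hp0]]].
set f1 := fun x => if x == N then N else f0 x.
set g1 := fun x => if x == N then N else g0 x.
have fN : forall x, x < N -> f1 x = f0 x /\ f0 x < N.
  move=> x hx; have [a _ _ _] := hb0 x hx.
  by rewrite /f1 (ltn_eqF hx).
have hb1 : bij N.+1 f1 g1.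
  move=> x hx'; case: (eqVneq x N) => [->|hxN].
    have e1 : f1 N = N by rewrite /f1 eqxx.
    have e2 : g1 N = N by rewrite /g1 eqxx.
    by rewrite e1 e2 ltnSn.
  have hx : x < N by rewrite ltn_neqAle hxN -ltnS.
  have [a b c e] := hb0 x hx.
  have f1x : f1 x = f0 x by rewrite /f1 (ltn_eqF hx).
  have g1x : g1 x = g0 x by rewrite /g1 (ltn_eqF hx).
  have g1f : g1 (f0 x) = g0 (f0 x) by rewrite /g1 (ltn_eqF a).
  have f1g : f1 (g0 x) = f0 (g0 x) by rewrite /f1 (ltn_eqF b).
  rewrite f1x g1x g1f f1g c e; split => //; exact: ltnW.
have [m [hm1 hm2 hm3]] : exists m, [/\ size m = size (edges H0),
    perm_eq (mask m (edges H0)) (map (relab f0) (Nn N E)) &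
    perm_eq (mask (map negb m) (edges H0)) (map (relab f0) (Fall N d E))].
  by apply: perm_mask; rewrite -map_cat.
set A' := map (relab f1) (Tt N E).
set H1 := TDec N.+1 (mask m (edges H0) ++ A').
have hallE : all (fun e => e.2 < d) E.
  by apply/allP => e he; have [_ _ _ ->] := tdec_edge hG1 he.
have hpos : forall c, c < d -> 0 < size (Uc N E c).
  by move=> c hc; have [] := Uc_props hN hG1 hv1 hc.
have hsum : \sum_(0 <= c < d) size (Uc N E c) = \sum_(0 <= c < d) (size (Uc N E c)).-1 + d.
  rewrite -{3}(subn0 d) -(muln1 (d - 0)) -sum_nat_const_nat -big_split /=.
  rewrite big_nat_cond [RHS]big_nat_cond; apply: eq_bigr => c /andP[/andP[_ hc] _].
  by rewrite addn1 prednK // hpos.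
have hTt : size (Tt N E) = d + size (Fall N d E).
  by rewrite (size_Tt N hallE) size_Fall hsum addnC.
have hTt2 : size (Tt N E) < 2 * d by rewrite /Tt size_filter.
have hF : size (Fall N d E) <= d - 1 by lia.
have r2 : rel_iso G1 (TDec N.+1 (Nn N E ++ Tt N E)).
  split => //; exists id, id; split; first by move=> x hx; split.
  rewrite (_ : map (relab id) (edges G1) = E); last first.
    by rewrite -[RHS]map_id; apply: eq_map => -[[a b] c].
  by rewrite perm_catC /Nn /Tt perm_filterC.
have r3 : rel_iso (TDec N.+1 (Nn N E ++ Tt N E)) H1.
  split => //; exists f1, g1; split => //=.
  rewrite map_cat; apply: perm_cat => //.
  apply: ptr hm2 _; rewrite (_ : map (relab f0) _ = map (relab f1) (Nn N E)) //; apply/eq_in_map => e he.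
  have [a b] := Nn_range hG1 hv1 he.
  by rewrite /relab /relab2 (fN _ a).1 (fN _ b).1.
have hH1 : is_tdec d H1 by apply: tdec_relab r3; apply: tdec_relab hG1 r2.
have e1N : f1 N = N by rewrite /f1 eqxx.
have nbF : forall f', f' \in Fall N d E -> forall y, y = f'.1.1 \/ y = f'.1.2 ->
    exists2 a', a' \in A' & (a'.2 = f'.2 /\ joins a'.1 N (f0 y)).
  move=> f' hf' y hy; have [hyN [a ha [hac hj]]] := Fall_nb hN hG1 hv1 hf' hy.
  exists (relab f1 a); first exact: map_f.
  split => //; have := joins_relab f1 hj; by rewrite e1N (fN _ hyN).1.
have nbF' : forall f, f \in mask (map negb m) (edges H0) -> forall x, x = f.1.1 \/ x = f.1.2 ->
    exists2 a', a' \in A' & (a'.2 = f.2 /\ joins a'.1 N x).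
  move=> f; rewrite (perm_mem hm3) => /mapP[f' hf' ->] x /= [->|->].
    by apply: nbF => //; left.
  by apply: nbF => //; right.
have hext : tree_ext d H0 H1 (size (Fall N d E)).
  exists m, A'; cbv zeta; rewrite -hvH0.
  split => //.
  - by rewrite (perm_size hm3) size_map.
  - by rewrite size_map hTt.
  split => //.
  - apply/allP => a' /mapP[a ha ->] /=.
    case/orP: (Tt_orient hG1 hv1 ha) => /andP[/eqP e1 h2]; rewrite e1 e1N (fN _ h2).1 eqxx (fN _ h2).2 //.
    by rewrite orbT.
  - move=> f hf x hx; have [a' ha' [_ hj]] := nbF' f hf x hx; by exists a'.
  - move=> i hi; split.
    + rewrite (permP hm3) count_relab count_Fall //.
      apply: leq_trans hF; rewrite -(@count_Fall N d E i hi); exact: count_size.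
    + by rewrite /A' count_relab count_Tt (permP hm3) count_relab count_Fall // add1n prednK ?hpos.
    + move=> f hf hfi x hx; have [a' ha' [hc hj]] := nbF' f hf x hx.
      by exists a' => //; split => //; rewrite hc hfi.
exists (rcons s0 H1); split.
- move=> i; rewrite size_rcons ltnS => hi; rewrite nth_rcons.
  have [hlt|->] : i < size s0 \/ i = size s0 by lia.
    by rewrite hlt; exact: c1.
  by rewrite ltnn eqxx.
- move=> i; rewrite size_rcons ltnS => hi; rewrite -rcons_cons !nth_rcons /=.
  have [hlt|->] : i < size s0 \/ i = size s0 by lia.
    by rewrite hlt ltnS (ltnW hlt); exact: c2.
  rewrite ltnSn ltnn eqxx -(last_nth K1).
  by exists (size (Fall N d E)).
- by rewrite last_rcons; apply: rel_iso_trans r1 (rel_iso_trans r2 r3).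
Qed.


Unset Implicit Arguments.

Theorem corollary3p5 (d : nat) (G : tdec) :
  1 <= d -> is_tdec d G ->
  exists s : seq tdec,
    (forall i, i < size s -> is_tdec d (nth K1 s i)) /\
    (forall i, i < size s ->
       exists2 j, j <= d - 1 & tree_ext d (nth K1 (K1 :: s) i) (nth K1 s i) j) /\
    tdec_iso (last K1 s) G.
Proof.
move=> hd hG.
have [hn _ _ _] := hG.2 0 hd.
case hv : (nv G) hn => [|n] // _.
have [s [c1 c2 r]] := main_ind hd hv hG.
exists s; split => //; split => //.
exact: rel_iso_tdec_iso hG r.
Qed.
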